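(* For any $\alpha,\beta\in\{0,1\}^\infty$ with $\alpha\ne\beta$, $$\frac{1}{5^{|\alpha\wedge\beta|+1}}\le d_H(\mathcal K_\alpha,\mathcal K_\beta)<\frac{3\sqrt5}{5^{|\alpha\wedge\beta|+1}},\qquad d(\mathcal K_\alpha,\mathcal K_\beta)\ge\frac{1}{5^{|\alpha\wedge\beta|+1}}.$$
   Context: Let $I=[0,1]^3$. Let $\mathcal D_0=\{(i,2,2),(2,i,2),(2,2,i): i=0,1,2,3,4\}$ and $\mathcal D_1=\{d\in\{0,\ldots,4\}^3:\ \text{at least two coordinates of } d \text{ lie in }\{0,4\}\}$. For $i=0,1$ let $T_i(A)=\bigcup_{d\in\mathcal D_i}\frac{d+A}{5}$. For $\alpha=\alpha_1\alpha_2\ldots\in\{0,1\}^\infty$ let $\mathcal K_\alpha=\bigcap_{k\ge1}T_{\alpha_1}\circ\cdots\circ T_{\alpha_k}(I)$. $|\alpha\wedge\beta|$ denotes the length of the longest common initial segment of $\alpha$ and $\beta$. $d_H$ is the Hausdorff distance and $d(A,B)=\inf\{|a-b|:a\in A,b\in B\}$. *)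

(* Defs.v *)
From HB Require Import structures.
From mathcomp Require Import all_boot all_order all_algebra.
From mathcomp Require Import all_classical all_reals.
Set Implicit Arguments. Unset Strict Implicit. Unset Printing Implicit Defensive.
Import Order.TTheory GRing.Theory Num.Theory.
Local Open Scope ring_scope.
Local Open Scope classical_set_scope.

Section Defs.
Variable R : realType.

Definition pt := (R * R * R)%type.

Definition edist (p q : pt) : R :=
  Num.sqrt ((p.1.1 - q.1.1) ^+ 2 + (p.1.2 - q.1.2) ^+ 2 + (p.2 - q.2) ^+ 2).

Definition cubeI : set pt :=
  [set p | (0 <= p.1.1 <= 1) /\ (0 <= p.1.2 <= 1) /\ (0 <= p.2 <= 1)].

Definition D0 (d : nat * nat * nat) : Prop :=
  let: (a, b, c) := d in
  [/\ (a <= 4)%N, (b <= 4)%N & (c <= 4)%N] /\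
  ((b == 2%N) && (c == 2%N) \/ (a == 2%N) && (c == 2%N) \/ (a == 2%N) && (b == 2%N)).

Definition in04 (x : nat) : bool := (x == 0%N) || (x == 4%N).

Definition D1 (d : nat * nat * nat) : Prop :=
  let: (a, b, c) := d in
  [/\ (a <= 4)%N, (b <= 4)%N & (c <= 4)%N] /\
  (in04 a && in04 b \/ in04 a && in04 c \/ in04 b && in04 c).

Definition Dset (i : bool) := if i then D1 else D0.

Definition sim (d : nat * nat * nat) (x : pt) : pt :=
  (((d.1.1)%:R + x.1.1) / 5, ((d.1.2)%:R + x.1.2) / 5, ((d.2)%:R + x.2) / 5).

Definition Tmap (i : bool) (A : set pt) : set pt :=
  [set y | exists d, Dset i d /\ exists2 x, A x & y = sim d x].

(* Tcomp alpha k A = T_{alpha_1} o ... o T_{alpha_k} (A); alpha_{j+1} = alpha j *)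
Fixpoint Tcomp (alpha : nat -> bool) (k : nat) (A : set pt) : set pt :=
  match k with
  | 0 => A
  | k'.+1 => Tcomp alpha k' (Tmap (alpha k') A)
  end.

Definition Kset (alpha : nat -> bool) : set pt :=
  [set x | forall k, (1 <= k)%N -> Tcomp alpha k cubeI x].

Definition pdist (a : pt) (B : set pt) : R := inf [set edist a b | b in B].
Definition setdist (A B : set pt) : R :=
  inf [set edist p.1 p.2 | p in [set p : pt * pt | A p.1 /\ B p.2]].
Definition hausdorff (A B : set pt) : R :=
  Num.max (sup [set pdist a B | a in A]) (sup [set pdist b A | b in B]).

End Defs.

(* Main.v *)
Require Import Defs.
From HB Require Import structures.
From mathcomp Require Import all_boot all_order all_algebra.
From mathcomp Require Import all_classical all_reals.
From mathcomp Require Import ring lra zify.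
Import Order.TTheory GRing.Theory Num.Theory.
Local Open Scope ring_scope.
Local Open Scope classical_set_scope.

Section S.
Variable R : realType.

Fixpoint ps (m : nat) (c : nat -> nat) : R :=
  match m with 0 => 0 | m'.+1 => ((c 0%N)%:R + ps m' (fun i => c i.+1)) / 5 end.

Definition X (c : nat -> nat) : R := sup (range (fun m => ps m c)).

Lemma ps_bnd m c : (forall i, (c i <= 4)%N) -> 0 <= ps m c <= 1.
Proof.
elim: m c => [|m IH] c hc /=; first by rewrite lexx ler01.
have /andP[h1 h2] := IH (fun i => c i.+1) (fun i => hc i.+1).
have h3 : (c 0%N)%:R <= 4 :> R by rewrite ler_nat.
have h4 : 0 <= (c 0%N)%:R :> R by [].
apply/andP; split; lra.
Qed.

Lemma X_hs c : (forall i, (c i <= 4)%N) -> has_sup (range (fun m => ps m c)).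
Proof.
move=> hc; split; first by exists (ps 0 c), 0%N.
by exists 1 => _ [m _ <-]; have /andP[] := ps_bnd m c hc.
Qed.

Lemma X_bnd c : (forall i, (c i <= 4)%N) -> 0 <= X c <= 1.
Proof.
move=> hc; apply/andP; split.
  have h : ps 0 c <= X c by apply: (ub_le_sup (X_hs c hc).2); exists 0%N.
  by [].
by apply: ge_sup; [exists (ps 0 c), 0%N | move=> _ [m _ <-]; have /andP[] := ps_bnd m c hc].
Qed.

Lemma X_eq c : (forall i, (c i <= 4)%N) ->
  X c = ((c 0%N)%:R + X (fun i => c i.+1)) / 5.
Proof.
move=> hc; have hc' : forall i, (c i.+1 <= 4)%N by move=> i; apply: hc.
have HA := X_hs c hc; have HB := X_hs _ hc'.
have h0 : 0 <= X (fun i => c i.+1) by have /andP[] := X_bnd _ hc'.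
have h4 : 0 <= (c 0%N)%:R :> R by [].
apply/eqP; rewrite eq_le; apply/andP; split.
  apply: ge_sup; first by exists (ps 0 c), 0%N.
  move=> _ [[|m] _ <-] /=; first lra.
  have : ps m (fun i => c i.+1) <= X (fun i => c i.+1).
    by apply: (ub_le_sup HB.2); exists m.
  lra.
suff : X (fun i => c i.+1) <= 5 * X c - (c 0%N)%:R by lra.
apply: ge_sup; first by exists (ps 0 (fun i => c i.+1)), 0%N.
move=> _ [m _ <-].
have : ps m.+1 c <= X c by apply: (ub_le_sup HA.2); exists m.+1.
rewrite /=; lra.
Qed.


Definition cj (j : nat) (p : pt R) : R :=
  if j == 0%N then p.1.1 else if j == 1%N then p.1.2 else p.2.
Definition dj (j : nat) (d : nat * nat * nat) : nat :=
  if j == 0%N then d.1.1 else if j == 1%N then d.1.2 else d.2.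

Lemma sim_cj j d (x : pt R) : cj j (sim d x) = ((dj j d)%:R + cj j x) / 5.
Proof. by rewrite /cj /dj /sim; case: j => [|[|j]]. Qed.

Lemma sq_le (x c : R) : `|x| <= c -> x ^+ 2 <= c ^+ 2.
Proof. rewrite ler_norml => /andP[h1 h2]; nra. Qed.

Lemma edist_ge j (a b : pt R) : (j < 3)%N -> `|cj j a - cj j b| <= edist a b.
Proof.
move=> hj; rewrite /edist -sqrtr_sqr; apply: ler_wsqrtr.
have h1 := sqr_ge0 (a.1.1 - b.1.1); have h2 := sqr_ge0 (a.1.2 - b.1.2).
have h3 := sqr_ge0 (a.2 - b.2).
by move: hj; rewrite /cj; case: j => [|[|[|j]]] //= _; lra.
Qed.

Lemma edist_le (a b : pt R) (c : R) : (forall j, (j < 3)%N -> `|cj j a - cj j b| <= c) ->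
  edist a b <= Num.sqrt (3 * c ^+ 2).
Proof.
move=> h; rewrite /edist; apply: ler_wsqrtr.
have h1 := sq_le _ _ (h 0%N isT); have h2 := sq_le _ _ (h 1%N isT); have h3 := sq_le _ _ (h 2%N isT).
rewrite /cj /= in h1 h2 h3; lra.
Qed.

Lemma edist_sym (a b : pt R) : edist a b = edist b a.
Proof.
rewrite /edist -(sqrrN (a.1.1 - b.1.1)) -(sqrrN (a.1.2 - b.1.2)) -(sqrrN (a.2 - b.2)).
by rewrite !opprB.
Qed.

Lemma edist_ge0 (a b : pt R) : 0 <= edist a b.
Proof. exact: sqrtr_ge0. Qed.

Lemma cube_cj j (z : pt R) : cubeI z -> 0 <= cj j z <= 1.
Proof. by rewrite /cj => -[h1 [h2 h3]]; case: j => [|[|j]]. Qed.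

Fixpoint comp (D : nat -> nat * nat * nat) (k : nat) (z : pt R) : pt R :=
  match k with 0 => z | k'.+1 => comp D k' (sim (D k') z) end.

Lemma comp_ext D D' k z : (forall i, (i < k)%N -> D i = D' i) -> comp D k z = comp D' k z.
Proof.
elim: k z => //= k IH z h; rewrite h // IH // => i hi; apply: h; lia.
Qed.

Lemma Tcomp_inv al k (A : set (pt R)) x : Tcomp al k A x ->
  exists D, (forall i, (i < k)%N -> Dset (al i) (D i)) /\ exists2 z, A z & x = comp D k z.
Proof.
elim: k A x => [|k IH] A x /=.
  by move=> hx; exists (fun _ => (0, 0, 0)%N); split => //; exists x.
move=> /IH [D [hD [y [d [hd [z hz ->]]] ->]]].
exists (fun i => if i == k then d else D i); split.
  move=> i hi; case: eqP => [->|ne] //; apply: hD.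
  by move: hi ne; rewrite ltnS leq_eqVlt => /orP[/eqP|].
exists z => //=; rewrite eqxx; apply: comp_ext => i hi.
by rewrite (ltn_eqF hi).
Qed.

Lemma Tcomp_comp be k (A : set (pt R)) D z : (forall i, (i < k)%N -> Dset (be i) (D i)) ->
  A z -> Tcomp be k A (comp D k z).
Proof.
elim: k A z => //= k IH A z hD hz; apply: IH.
  by move=> i hi; apply: hD; lia.
by exists (D k); split; [apply: hD | exists z].
Qed.

Definition bnd (d : nat * nat * nat) := [/\ (d.1.1 <= 4)%N, (d.1.2 <= 4)%N & (d.2 <= 4)%N].

Definition P (D : nat -> nat * nat * nat) : pt R :=
  (X (fun i => (D i).1.1), X (fun i => (D i).1.2), X (fun i => (D i).2)).

Lemma P_eq D : (forall i, bnd (D i)) -> P D = sim (D 0%N) (P (fun i => D i.+1)).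
Proof.
move=> hD; rewrite /P /sim /=; congr (_, _, _); apply: X_eq => i; by case: (hD i).
Qed.

Lemma P_cube D : (forall i, bnd (D i)) -> cubeI (P D).
Proof.
move=> hD; rewrite /cubeI /P /=; split; [|split]; apply: X_bnd => i; by case: (hD i).
Qed.

Lemma P_comp D k : (forall i, bnd (D i)) -> P D = comp D k (P (fun i => D (i + k)%N)).
Proof.
move=> hD; elim: k => [|k IH] /=.
  by congr P; apply: funext => i; rewrite addn0.
rewrite {1}IH (P_eq (fun i => D (i + k)%N)); last by move=> i; apply: hD.
rewrite add0n.
by congr (comp _ _ (sim _ (P _))); apply: funext => i; rewrite addnS addSn.
Qed.

Lemma Dset_bnd b d : Dset b d -> bnd d.
Proof. by case: b; case: d => [[x y] z] /= [[h1 h2 h3] _]; split. Qed.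

Lemma P_K be D : (forall i, Dset (be i) (D i)) -> Kset be (P D).
Proof.
move=> hD k _; have hb : forall i, bnd (D i) by move=> i; exact: Dset_bnd (hD i).
rewrite (P_comp D k hb); apply: Tcomp_comp; first by move=> i _; apply: hD.
by apply: P_cube => i; apply: hb.
Qed.

Lemma comp_form j D k (z : pt R) : exists N : nat, cj j (comp D k z) = (N%:R + cj j z) / 5 ^+ k.
Proof.
elim: k z => [|k IH] z /=; first by exists 0%N; rewrite add0r expr0 divr1.
have [N ->] := IH (sim (D k) z); exists (5 * N + dj j (D k))%N.
rewrite sim_cj natrD natrM exprS; field.
by rewrite expf_neq0 // pnatr_eq0.
Qed.

Lemma comp_diff j D k (z w : pt R) :
  cj j (comp D k z) - cj j (comp D k w) = (cj j z - cj j w) / 5 ^+ k.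
Proof.
elim: k z w => [|k IH] z w /=; first by rewrite expr0 divr1.
rewrite IH !sim_cj exprS; field.
by rewrite expf_neq0 // pnatr_eq0.
Qed.


Lemma in04P x : in04 x -> x = 0%N \/ x = 4%N.
Proof. by rewrite /in04 => /orP[/eqP->|/eqP->]; [left|right]. Qed.

Lemma sep_digits d e : D0 d -> D1 e ->
  exists j, [/\ (j < 3)%N, dj j d = 2%N & (dj j e = 0%N \/ dj j e = 4%N)].
Proof.
case: d => [[a b] c]; case: e => [[a' b'] c'] /= [_ hd] [_ he].
move: hd he => [/andP[/eqP-> /eqP->] | [/andP[/eqP-> /eqP->] | /andP[/eqP-> /eqP->]]]
  [/andP[h1 h2] | [/andP[h1 h2] | /andP[h1 h2]]];
  solve [ exists 0%N; split => //; exact: in04P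
        | exists 1%N; split => //; exact: in04P
        | exists 2%N; split => //; exact: in04P ].
Qed.

Definition canon (b : bool) : nat * nat * nat := if b then (0, 0, 0)%N else (2, 2, 2)%N.

Lemma canon_ok b : Dset b (canon b).
Proof. by case: b; split => //=; [left | left]. Qed.

Lemma near_digit d (b : bool) : bnd d -> exists e, Dset b e /\
  forall j, (j < 3)%N -> (dj j d <= dj j e + 2)%N /\ (dj j e <= dj j d + 2)%N.
Proof.
case: d => [[x y] z] [/= h1 h2 h3]; case: b.
  pose f (t : nat) := if (t <= 2)%N then 0%N else 4%N.
  have hf t : (t <= 4)%N -> (t <= f t + 2)%N /\ (f t <= t + 2)%N /\ in04 (f t).
    by rewrite /f; case: ifP => h ht; (split; [lia | split; [lia | by []]]).
  have [a1 [a2 a3]] := hf x h1; have [b1 [b2 b3]] := hf y h2; have [c1 [c2 c3]] := hf z h3.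
  exists (f x, f y, f z); split.
    split; first by split; rewrite /f; case: ifP.
    by left; rewrite a3 b3.
  by move=> j; rewrite /dj; case: j => [|[|[|j]]] //= _; split.
exists (2, 2, z)%N; split.
  by split => //; right; right.
by move=> j; rewrite /dj; case: j => [|[|[|j]]] //= _; split; lia.
Qed.

Lemma scale_bound (x c r : R) : 0 < r -> `|x| <= c -> `|x * r| <= c * r.
Proof. by move=> hr hx; rewrite normrM (gtr0_norm hr) ler_pM2r. Qed.

Lemma upper al be n : (forall i, (i < n)%N -> al i = be i) ->
  forall a : pt R, Kset al a -> exists b, Kset be b /\
    edist a b <= Num.sqrt (3 * (3 / 5 ^+ n.+1) ^+ 2).
Proof.
move=> hpre a /(_ n.+1 isT) /Tcomp_inv [D [hD [z hz ->]]].
have [e [he hde]] := near_digit (D n) (be n) (Dset_bnd _ _ (hD n (ltnSn n))).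
pose D' i := if (i < n)%N then D i else if i == n then e else canon (be i).
have hD' : forall i, Dset (be i) (D' i).
  move=> i; rewrite /D'; case: ltnP => h1.
    by rewrite -hpre //; apply: hD; lia.
  by case: eqP => [->|_] //; apply: canon_ok.
have hb : forall i, bnd (D' i) by move=> i; exact: Dset_bnd (hD' i).
exists (P D'); split; first exact: P_K.
rewrite (P_comp D' n hb) /= (comp_ext D' D); last first.
  by move=> i hi; rewrite /D' hi.
rewrite (P_eq (fun i => D' (i + n)%N)); last by move=> i; apply: hb.
rewrite add0n {1}/D' ltnn eqxx.
set w := P _.
have hw : cubeI w by apply: P_cube => i; apply: hb.
apply: edist_le => j hj; rewrite comp_diff !sim_cj.
have [z0 z1] := andP (cube_cj j z hz); have [w0 w1] := andP (cube_cj j w hw).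
have [k1 k2] := hde j hj.
move: k1 k2; rewrite -!(ler_nat R) !natrD => k1 k2.
have q0 : 0 < (5 : R) ^+ n by rewrite exprn_gt0.
have -> : ((dj j (D n))%:R + cj j z) / 5 - ((dj j e)%:R + cj j w) / 5 =
   ((dj j (D n))%:R - (dj j e)%:R + cj j z - cj j w) / 5 by field.
rewrite (_ : 3 / 5 ^+ n.+1 = 3 * (5 * 5 ^+ n)^-1); last by rewrite exprS.
rewrite (_ : _ / 5 / 5 ^+ n = ((dj j (D n))%:R - (dj j e)%:R + cj j z - cj j w) * (5 * 5 ^+ n)^-1); last first.
  by rewrite invfM mulrA.
apply: scale_bound; first by rewrite invr_gt0 mulr_gt0.
rewrite ler_norml; apply/andP; split; lra.
Qed.


Lemma int_gap (N N' : nat) (s t : R) : (s = 2 \/ s = -2) -> -1 <= t <= 1 ->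
  1 <= `|5 * N%:R - 5 * N'%:R + s + t|.
Proof.
move=> hs /andP[t0 t1]; rewrite ler_normr; apply/orP.
case: (ltngtP N N') => h.
- have : (N.+1)%:R <= N'%:R :> R by rewrite ler_nat.
  rewrite -addn1 natrD => h'; right; case: hs => ->; lra.
- have : (N'.+1)%:R <= N%:R :> R by rewrite ler_nat.
  rewrite -addn1 natrD => h'; left; case: hs => ->; lra.
- rewrite h; case: hs => ->; [left|right]; lra.
Qed.

Lemma core D D' n d e (z w : pt R) : D0 d -> D1 e -> cubeI z -> cubeI w ->
  (5 ^+ n.+1)^-1 <= edist (comp D n (sim d z)) (comp D' n (sim e w)).
Proof.
move=> hd he hz hw; have [j [hj hdj hej]] := sep_digits d e hd he.
apply: le_trans (edist_ge j _ _ hj).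
have [N ->] := comp_form j D n (sim d z); have [N' ->] := comp_form j D' n (sim e w).
rewrite !sim_cj hdj.
have [z0 z1] := andP (cube_cj j z hz); have [w0 w1] := andP (cube_cj j w hw).
have q0 : 0 < (5 : R) ^+ n by rewrite exprn_gt0.
set t := cj j z - cj j w.
pose s : R := 2 - (dj j e)%:R.
have -> : (N%:R + (2%:R + cj j z) / 5) / 5 ^+ n - (N'%:R + ((dj j e)%:R + cj j w) / 5) / 5 ^+ n
   = (5 * N%:R - 5 * N'%:R + s + t) * (5 ^+ n.+1)^-1.
  by rewrite /s /t exprS; field; rewrite expf_neq0 // pnatr_eq0.
have r0 : 0 < ((5 : R) ^+ n.+1)^-1 by rewrite invr_gt0 exprn_gt0.
rewrite normrM (gtr0_norm r0) -{1}(mul1r (_^-1)) ler_pM2r //.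
apply: int_gap; last by rewrite /t; apply/andP; split; lra.
by rewrite /s; case: hej => ->; [left|right]; rewrite ?subr0 //; lra.
Qed.

Lemma sep al be n (a b : pt R) : al n <> be n -> Kset al a -> Kset be b ->
  (5 ^+ n.+1)^-1 <= edist a b.
Proof.
move=> hne /(_ n.+1 isT) /Tcomp_inv [D [hD [z hz ->]]].
move=> /(_ n.+1 isT) /Tcomp_inv [D' [hD' [w hw ->]]] /=.
have h1 := hD n (ltnSn n); have h2 := hD' n (ltnSn n).
have zc : cubeI z by [].
move: h1 h2 hne; case: (al n); case: (be n) => //= h1 h2 _.
  by rewrite edist_sym; apply: core.
by apply: core.
Qed.

End S.

Theorem corollary1 (R : realType) (alpha beta : nat -> bool) (n : nat) :
  (forall i, (i < n)%N -> alpha i = beta i) -> alpha n <> beta n ->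
  [/\ (5%:R ^+ n.+1)^-1 <= hausdorff (@Kset R alpha) (@Kset R beta) :> R,
      hausdorff (@Kset R alpha) (@Kset R beta) < 3 * Num.sqrt 5 / 5%:R ^+ n.+1
    & (5%:R ^+ n.+1)^-1 <= setdist (@Kset R alpha) (@Kset R beta)].
Proof.
move=> hpre hne.
have hpre' : forall i, (i < n)%N -> beta i = alpha i by move=> i hi; rewrite hpre.
have hne' : beta n <> alpha n by move=> h; apply: hne.
set KA := @Kset R alpha; set KB := @Kset R beta.
set c : R := Num.sqrt (3 * (3 / 5 ^+ n.+1) ^+ 2).
have a0K : KA (P R (fun i => canon (alpha i))) by apply: P_K => i; apply: canon_ok.
have b0K : KB (P R (fun i => canon (beta i))) by apply: P_K => i; apply: canon_ok.
set a0 := P R _ in a0K; set b0 := P R _ in b0K.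
have pd_up : forall (A B : set (pt R)) al be, A = Kset al -> B = Kset be ->
    (forall i, (i < n)%N -> al i = be i) ->
    forall a, A a -> pdist a B <= c.
  move=> A B al be -> -> hp a ha.
  have [b [hb hab]] := upper R al be n hp a ha.
  apply: le_trans hab; rewrite /pdist.
  apply: (ge_inf); last by exists b.
  by exists 0 => _ [y _ <-]; apply: edist_ge0.
have pd_lo : forall (A B : set (pt R)) al be, A = Kset al -> B = Kset be ->
    al n <> be n -> B !=set0 ->
    forall a, A a -> (5 ^+ n.+1)^-1 <= pdist a B.
  move=> A B al be -> -> hn [b hb] a ha; rewrite /pdist.
  apply: lb_le_inf; first by exists (edist a b), b.
  by move=> _ [y hy <-]; apply: (sep R al be).
have sup_up : forall (A B : set (pt R)) al be, A = Kset al -> B = Kset be ->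
    (forall i, (i < n)%N -> al i = be i) -> A !=set0 ->
    sup [set pdist a B | a in A] <= c.
  move=> A B al be eA eB hp [a ha]; apply: ge_sup; first by exists (pdist a B), a.
  by move=> _ [y hy <-]; apply: (pd_up A B al be).
have hs1 := sup_up KA KB alpha beta erefl erefl hpre (ex_intro _ a0 a0K).
have hs2 := sup_up KB KA beta alpha erefl erefl hpre' (ex_intro _ b0 b0K).
have hc : c < 3 * Num.sqrt 5 / 5 ^+ n.+1.
  have q0 : 0 < (5 : R) ^+ n.+1 by rewrite exprn_gt0.
  have pos : 0 < 3 * Num.sqrt 5 / 5 ^+ n.+1 :> R.
    by rewrite mulr_gt0 // ?invr_gt0 // mulr_gt0 // sqrtr_gt0.
  rewrite -(gtr0_norm pos) -sqrtr_sqr ltr_sqrt; last by rewrite exprn_gt0.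
  rewrite !exprMn sqr_sqrtr // !mulrA.
  have : 0 < ((5 : R) ^+ n.+1)^-1 ^+ 2 by rewrite exprn_gt0 // invr_gt0.
  lra.
split.
- apply: le_trans (pd_lo KA KB alpha beta erefl erefl hne (ex_intro _ b0 b0K) a0 a0K) _.
  rewrite /hausdorff le_max; apply/orP; left.
  apply: (ub_le_sup); last by exists a0.
  by exists c => _ [y hy <-]; apply: (pd_up KA KB alpha beta).
- by rewrite /hausdorff; apply: le_lt_trans hc; rewrite ge_max hs1 hs2.
- rewrite /setdist; apply: lb_le_inf; first by exists (edist a0 b0), (a0, b0).
  by move=> _ [[x y] [hx hy] <-]; apply: (sep R alpha beta).
Qed.
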